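(* Let $G=(V,E)$ be a connected quartic graph which is Bakry-\'Emery curvature sharp at every vertex and in which every edge is contained in exactly one triangle. Then $G$ is isomorphic to the Cartesian product $K_3\times K_3$.
   Context: $\Delta f(x)=\sum_{y\sim x}(f(y)-f(x))$, $2\Gamma(f,g)=\Delta(fg)-f\Delta g-g\Delta f$, $2\Gamma_2(f,g)=\Delta\Gamma(f,g)-\Gamma(f,\Delta g)-\Gamma(g,\Delta f)$; $\mathcal K_\infty(x)$ is the supremum of $K$ with $\Gamma_2(f,f)(x)\ge K\Gamma(f,f)(x)$ for all $f:V\to\mathbb R$. A vertex $x$ of a $D$-regular graph is curvature sharp if $\mathcal K_\infty(x)=2+\#_\Delta(x)/D$, where $\#_\Delta(x)$ is the number of triangles containing $x$. *)

(* Defs.v *)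
From Stdlib Require Import Reals List Relations ClassicalEpsilon.
Import ListNotations.
Open Scope R_scope.

(* A locally finite simple graph on an arbitrary vertex type V is given by a
   neighbour function N : V -> list V; y ~ x iff In y (N x). *)
Definition simple_graph {V : Type} (N : V -> list V) : Prop :=
  (forall x y, In y (N x) -> In x (N y)) /\
  (forall x, ~ In x (N x)) /\
  (forall x, NoDup (N x)).

Definition regular {V : Type} (N : V -> list V) (D : nat) : Prop :=
  forall x, length (N x) = D.

Definition connected {V : Type} (N : V -> list V) : Prop :=
  inhabited V /\
  forall x y, clos_refl_trans V (fun a b => In b (N a)) x y.

Definition sumR (l : list R) : R := fold_right Rplus 0 l.

Definition lap {V : Type} (N : V -> list V) (f : V -> R) (x : V) : R :=
  sumR (map (fun y => f y - f x) (N x)).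

Definition Gam {V : Type} (N : V -> list V) (f g : V -> R) (x : V) : R :=
  / 2 * (lap N (fun z => f z * g z) x - f x * lap N g x - g x * lap N f x).

Definition Gam2 {V : Type} (N : V -> list V) (f g : V -> R) (x : V) : R :=
  / 2 * (lap N (Gam N f g) x - Gam N f (lap N g) x - Gam N g (lap N f) x).

Definition curv_set {V : Type} (N : V -> list V) (x : V) (K : R) : Prop :=
  forall f : V -> R, Gam2 N f f x >= K * Gam N f f x.

Definition K_inf_eq {V : Type} (N : V -> list V) (x : V) (c : R) : Prop :=
  is_lub (curv_set N x) c.

Definition indicR (P : Prop) : R :=
  if excluded_middle_informative P then 1 else 0.

(* Number of triangles containing x: unordered adjacent pairs of neighbours. *)
Definition ntri {V : Type} (N : V -> list V) (x : V) : R :=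
  / 2 * sumR (map (fun y => sumR (map (fun z => indicR (In z (N y))) (N x))) (N x)).

Definition curvature_sharp {V : Type} (N : V -> list V) (D : nat) (x : V) : Prop :=
  K_inf_eq N x (2 + ntri N x / INR D).

Definition edge_in_unique_triangle {V : Type} (N : V -> list V) : Prop :=
  forall x y, In y (N x) -> exists! z, In z (N x) /\ In z (N y).

Inductive three : Type := T0 | T1 | T2.

Definition k33_adj (p q : three * three) : Prop :=
  (fst p = fst q /\ snd p <> snd q) \/ (snd p = snd q /\ fst p <> fst q).

Definition iso_to_K3xK3 {V : Type} (N : V -> list V) : Prop :=
  exists (f : V -> three * three) (g : three * three -> V),
    (forall x, g (f x) = x) /\ (forall p, f (g p) = p) /\
    (forall x y, In y (N x) <-> k33_adj (f x) (f y)).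

(* Main.v *)
Require Import Defs.
From Stdlib Require Import Reals List Permutation Lra Classical Relations ClassicalEpsilon Lia.
Import ListNotations.
Open Scope R_scope.

Lemma sumR_perm (l l' : list R) : Permutation l l' -> sumR l = sumR l'.
Proof. induction 1; simpl; try lra. Qed.

Lemma sum_map_perm {A : Type} (h : A -> R) (l l' : list A) :
  Permutation l l' -> sumR (map h l) = sumR (map h l').
Proof. intro H; apply sumR_perm, Permutation_map, H. Qed.

Lemma lap_perm {V : Type} (N : V -> list V) h y l :
  Permutation (N y) l -> lap N h y = sumR (map (fun w => h w - h y) l).
Proof. intro H; unfold lap; apply sum_map_perm, H. Qed.

Lemma indicR_T (P : Prop) : P -> indicR P = 1.
Proof. intro H; unfold indicR; destruct excluded_middle_informative; tauto. Qed.
Lemma indicR_F (P : Prop) : ~ P -> indicR P = 0.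
Proof. intro H; unfold indicR; destruct excluded_middle_informative; tauto. Qed.

Lemma nodup4 {A : Type} (a b c d : A) : NoDup [a;b;c;d] ->
  a <> b /\ a <> c /\ a <> d /\ b <> c /\ b <> d /\ c <> d.
Proof.
  intro H. inversion_clear H as [|? ? H1 H2]. inversion_clear H2 as [|? ? H3 H4].
  inversion_clear H4 as [|? ? H5 H6]. simpl in *. intuition subst; tauto.
Qed.

Lemma mk_nodup4 {A : Type} (a b c d : A) :
  a <> b -> a <> c -> a <> d -> b <> c -> b <> d -> c <> d -> NoDup [a;b;c;d].
Proof.
  intros. repeat constructor; simpl; intuition congruence.
Qed.

Lemma perm4 {A : Type} (l : list A) p q : NoDup l -> length l = 4%nat -> In p l -> In q l -> p <> q ->
  exists o1 o2, Permutation l [p;q;o1;o2].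
Proof.
  intros Hnd Hl Hp Hq Hpq.
  destruct (in_split _ _ Hp) as [l1 [l2 E]]. subst l.
  assert (Hq' : In q (l1 ++ l2)).
  { apply in_app_or in Hq; apply in_or_app; simpl in Hq; intuition congruence. }
  destruct (in_split _ _ Hq') as [m1 [m2 E]].
  assert (Hlen : length (m1 ++ m2) = 2%nat).
  { assert (H3 : length (l1 ++ l2) = 3%nat) by (rewrite length_app in *; simpl in Hl; lia).
    rewrite E, length_app in H3; simpl in H3; rewrite length_app; lia. }
  destruct (m1 ++ m2) as [|o1 [|o2 [|]]] eqn:Em; simpl in Hlen; try discriminate.
  exists o1, o2.
  eapply perm_trans. apply Permutation_sym, Permutation_middle.
  apply perm_skip. rewrite E. eapply perm_trans. apply Permutation_sym, Permutation_middle.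
  rewrite Em. apply Permutation_refl.
Qed.

Lemma gsym {V : Type} (N : V -> list V) x y : simple_graph N -> In y (N x) -> In x (N y).
Proof. intros [H _]; apply H. Qed.
Lemma girr {V : Type} (N : V -> list V) x : simple_graph N -> ~ In x (N x).
Proof. intros [_ [H _]]; apply H. Qed.
Lemma gnd {V : Type} (N : V -> list V) x : simple_graph N -> NoDup (N x).
Proof. intros [_ [_ H]]; apply H. Qed.

Lemma common_eq {V : Type} (N : V -> list V) x u v w :
  edge_in_unique_triangle N ->
  In u (N x) -> In v (N x) -> In v (N u) -> In w (N x) -> In w (N u) -> w = v.
Proof.
  intros Ht Hu Hv Hvu Hw Hwu. destruct (Ht x u Hu) as [z [_ Hz]].
  rewrite <- (Hz v (conj Hv Hvu)). symmetry; apply Hz; auto.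
Qed.

Lemma four_list {V : Type} (N : V -> list V) x : regular N 4 ->
  exists y1 y2 y3 y4, N x = [y1;y2;y3;y4].
Proof.
  intro H. specialize (H x). destruct (N x) as [|y1 [|y2 [|y3 [|y4 [|]]]]];
  simpl in H; try discriminate. eauto 6.
Qed.

Lemma pair_rest {V : Type} (N : V -> list V) x a A c d :
  simple_graph N -> edge_in_unique_triangle N ->
  Permutation (N x) [a;A;c;d] -> In A (N a) -> In d (N c).
Proof.
  intros Hg Ht HP HaA.
  pose proof (Permutation_NoDup HP (gnd N x Hg)) as Hnd.
  destruct (nodup4 _ _ _ _ Hnd) as (n1&n2&n3&n4&n5&n6).
  assert (Hin : forall y, In y [a;A;c;d] -> In y (N x)) by (intros; eapply Permutation_in; [apply Permutation_sym, HP|auto]).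
  assert (Ha : In a (N x)) by (apply Hin; simpl; tauto).
  assert (HA : In A (N x)) by (apply Hin; simpl; tauto).
  assert (Hc : In c (N x)) by (apply Hin; simpl; tauto).
  destruct (Ht x c Hc) as [q [[Hq1 Hq2] _]].
  pose proof (Permutation_in _ HP Hq1) as Hq. simpl in Hq.
  destruct Hq as [<-|[<-|[<-|[<-|[]]]]].
  - exfalso. apply n4. symmetry. eapply (common_eq N x a); eauto. apply gsym; auto.
  - exfalso. apply n2. symmetry. eapply (common_eq N x A); eauto; apply gsym; auto.
  - exfalso. eapply girr; eauto.
  - auto.
Qed.

Lemma split_at {V : Type} (N : V -> list V) x :
  simple_graph N -> regular N 4 -> edge_in_unique_triangle N ->
  exists a A b B, Permutation (N x) [a;A;b;B] /\ In A (N a) /\ In B (N b).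
Proof.
  intros Hg Hr Ht. destruct (four_list N x Hr) as (y1&y2&y3&y4&E).
  assert (H1 : In y1 (N x)) by (rewrite E; simpl; tauto).
  destruct (Ht x y1 H1) as [p [[Hp1 Hp2] _]].
  rewrite E in Hp1. simpl in Hp1.
  destruct Hp1 as [<-|[<-|[<-|[<-|[]]]]].
  - exfalso; eapply girr; eauto.
  - exists y1, y2, y3, y4. rewrite E. split; [apply Permutation_refl|]. split; auto.
    eapply pair_rest; eauto. rewrite E; apply Permutation_refl.
  - assert (HP : Permutation (N x) [y1;y3;y2;y4]) by (rewrite E; constructor; constructor).
    exists y1, y3, y2, y4. split; auto. split; auto. eapply pair_rest; eauto.
  - assert (HP : Permutation (N x) [y1;y4;y2;y3]).
    { rewrite E. constructor. eapply perm_trans; [|apply perm_swap].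
      constructor. apply perm_swap. }
    exists y1, y4, y2, y3. split; auto. split; auto. eapply pair_rest; eauto.
Qed.

Lemma out_at {V : Type} (N : V -> list V) x y P :
  simple_graph N -> regular N 4 -> edge_in_unique_triangle N ->
  In y (N x) -> In P (N x) -> In P (N y) ->
  exists o1 o2, Permutation (N y) [x;P;o1;o2] /\ ~ In o1 (N x) /\ ~ In o2 (N x).
Proof.
  intros Hg Hr Ht Hy HP HPy.
  assert (Hxy : In x (N y)) by (apply gsym; auto).
  assert (Hne : x <> P) by (intro; subst; eapply girr; eauto).
  destruct (perm4 (N y) x P (gnd N y Hg) (Hr y) Hxy HPy Hne) as (o1&o2&Hperm).
  pose proof (Permutation_NoDup Hperm (gnd N y Hg)) as Hnd.
  destruct (nodup4 _ _ _ _ Hnd) as (n1&n2&n3&n4&n5&n6).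
  exists o1, o2. split; auto. split; intro Ho.
  - apply n4. symmetry. eapply (common_eq N x y); eauto.
    eapply Permutation_in; [apply Permutation_sym, Hperm|simpl; tauto].
  - apply n5. symmetry. eapply (common_eq N x y); eauto.
    eapply Permutation_in; [apply Permutation_sym, Hperm|simpl; tauto].
Qed.

Lemma calc {V : Type} (N : V -> list V) (f : V -> R) x a A b B z w p1 p2 q1 q2 r1 r2 :
  Permutation (N x) [a;A;b;B] -> Permutation (N a) [x;A;z;w] ->
  Permutation (N A) [x;a;p1;p2] -> Permutation (N b) [x;B;q1;q2] ->
  Permutation (N B) [x;b;r1;r2] ->
  f x = 0 -> f a = 1 -> f A = 1 -> f b = -1 -> f B = -1 -> f z = 1 -> f w = 0 ->
  f p1 = 0 -> f p2 = 0 -> f q1 = 0 -> f q2 = 0 -> f r1 = 0 -> f r2 = 0 ->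
  Gam N f f x = 2 /\ Gam2 N f f x = 17/4.
Proof.
  intros Px Pa PA Pb PB fx fa fA fb fB fz fw fp1 fp2 fq1 fq2 fr1 fr2.
  assert (Gx : Gam N f f x = 2).
  { unfold Gam. rewrite !(lap_perm N _ x _ Px). cbn [sumR map fold_right].
    rewrite fx, fa, fA, fb, fB. lra. }
  assert (La : lap N f a = -2) by (rewrite (lap_perm N _ a _ Pa); cbn [sumR map fold_right];
    rewrite fx, fa, fA, fz, fw; lra).
  assert (LA : lap N f A = -3) by (rewrite (lap_perm N _ A _ PA); cbn [sumR map fold_right];
    rewrite fx, fa, fA, fp1, fp2; lra).
  assert (Lb : lap N f b = 3) by (rewrite (lap_perm N _ b _ Pb); cbn [sumR map fold_right];
    rewrite fx, fb, fB, fq1, fq2; lra).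
  assert (LB : lap N f B = 3) by (rewrite (lap_perm N _ B _ PB); cbn [sumR map fold_right];
    rewrite fx, fb, fB, fr1, fr2; lra).
  assert (Lx : lap N f x = 0) by (rewrite (lap_perm N _ x _ Px); cbn [sumR map fold_right];
    rewrite fx, fa, fA, fb, fB; lra).
  assert (Ga : Gam N f f a = 1).
  { unfold Gam. rewrite La. rewrite (lap_perm N _ a _ Pa); cbn [sumR map fold_right].
    rewrite fx, fa, fA, fz, fw; lra. }
  assert (GA : Gam N f f A = 3/2).
  { unfold Gam. rewrite LA. rewrite (lap_perm N _ A _ PA); cbn [sumR map fold_right].
    rewrite fx, fa, fA, fp1, fp2; lra. }
  assert (Gb : Gam N f f b = 3/2).
  { unfold Gam. rewrite Lb. rewrite (lap_perm N _ b _ Pb); cbn [sumR map fold_right].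
    rewrite fx, fb, fB, fq1, fq2; lra. }
  assert (GB : Gam N f f B = 3/2).
  { unfold Gam. rewrite LB. rewrite (lap_perm N _ B _ PB); cbn [sumR map fold_right].
    rewrite fx, fb, fB, fr1, fr2; lra. }
  split; auto.
  unfold Gam2. rewrite (lap_perm N _ x _ Px). cbn [sumR map fold_right].
  rewrite Ga, GA, Gb, GB, Gx.
  unfold Gam. rewrite !(lap_perm N _ x _ Px). cbn [sumR map fold_right].
  rewrite La, LA, Lb, LB, fx, fa, fA, fb, fB. lra.
Qed.

Lemma sharp_ineq {V : Type} (N : V -> list V) x f :
  K_inf_eq N x (5/2) -> Gam N f f x > 0 -> Gam2 N f f x >= 5/2 * Gam N f f x.
Proof.
  intros [Hub Hl] Hpos. destruct (Rge_dec (Gam2 N f f x) (5/2 * Gam N f f x)) as [|Hlt]; auto.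
  exfalso. apply Rnot_ge_lt in Hlt.
  assert (Hb : is_upper_bound (curv_set N x) (Gam2 N f f x / Gam N f f x)).
  { intros K HK. specialize (HK f). apply (Rmult_le_reg_r (Gam N f f x)); auto.
    unfold Rdiv; rewrite Rmult_assoc, Rinv_l, Rmult_1_r; lra. }
  specialize (Hl _ Hb).
  assert (Gam2 N f f x / Gam N f f x < 5/2).
  { apply (Rmult_lt_reg_r (Gam N f f x)); auto.
    unfold Rdiv; rewrite Rmult_assoc, Rinv_l, Rmult_1_r; lra. }
  lra.
Qed.

Lemma ntri_val {V : Type} (N : V -> list V) x L : Permutation (N x) L ->
  ntri N x = / 2 * sumR (map (fun y => sumR (map (fun z => indicR (In z (N y))) L)) L).
Proof.
  intro HP. unfold ntri. rewrite (sum_map_perm _ _ _ HP). f_equal. f_equal.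
  apply map_ext. intro y. apply sum_map_perm, HP.
Qed.

Lemma in_perm {V : Type} (l l' : list V) y : Permutation l l' -> In y l' -> In y l.
Proof. intros HP H. eapply Permutation_in; [apply Permutation_sym, HP|exact H]. Qed.

Lemma no_single {V : Type} (N : V -> list V) x a A b B z :
  simple_graph N -> regular N 4 -> edge_in_unique_triangle N ->
  curvature_sharp N 4 x ->
  Permutation (N x) [a;A;b;B] -> In A (N a) -> In B (N b) ->
  In z (N a) -> z <> x -> z <> A -> ~ In z (N b) -> ~ In z (N B) -> False.
Proof.
  intros Hg Hr Ht Hs Px HaA HbB Hz zx zA zb zB.
  pose proof (Permutation_NoDup Px (gnd N x Hg)) as Hnd.
  destruct (nodup4 _ _ _ _ Hnd) as (n1&n2&n3&n4&n5&n6).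
  assert (Ia : In a (N x)) by (apply (in_perm _ _ _ Px); simpl; tauto).
  assert (IA : In A (N x)) by (apply (in_perm _ _ _ Px); simpl; tauto).
  assert (Ib : In b (N x)) by (apply (in_perm _ _ _ Px); simpl; tauto).
  assert (IB : In B (N x)) by (apply (in_perm _ _ _ Px); simpl; tauto).
  assert (Hsym : forall u v, In v (N u) -> In u (N v)) by (intros; apply gsym; auto).
  assert (Hirr : forall u, ~ In u (N u)) by (intros; apply girr; auto).
  assert (nab : ~ In b (N a)) by (intro; apply n4; symmetry; eapply (common_eq N x a); eauto).
  assert (naB : ~ In B (N a)) by (intro; apply n5; symmetry; eapply (common_eq N x a); eauto).
  assert (nAb : ~ In b (N A)) by (intro; apply n2; symmetry; eapply (common_eq N x A); eauto).
  assert (nAB : ~ In B (N A)) by (intro; apply n3; symmetry; eapply (common_eq N x A); eauto).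
  assert (nAz : ~ In z (N A)) by (intro; apply zx; eapply (common_eq N a A); eauto).
  assert (xa : x <> a) by (intro; subst; eauto).
  assert (xA : x <> A) by (intro; subst; eauto).
  assert (xb : x <> b) by (intro; subst; eauto).
  assert (xB : x <> B) by (intro; subst; eauto).
  assert (za : z <> a) by (intro; subst; eauto).
  assert (zb' : z <> b) by (intro; subst; eauto).
  assert (zB' : z <> B) by (intro; subst; eauto).
  destruct (out_at N x a A Hg Hr Ht Ia IA HaA) as (o1&o2&Pa0&no1&no2).
  assert (Hw : exists w, Permutation (N a) [x;A;z;w] /\ ~ In w (N x) /\ w <> z).
  { pose proof (Permutation_NoDup Pa0 (gnd N a Hg)) as Hnda.
    destruct (nodup4 _ _ _ _ Hnda) as (m1&m2&m3&m4&m5&m6).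
    pose proof (Permutation_in _ Pa0 Hz) as Hz'. simpl in Hz'.
    destruct Hz' as [<-|[<-|[<-|[<-|[]]]]]; try congruence.
    - exists o2. split; auto.
    - exists o1. split; [|split; auto]. eapply perm_trans; [exact Pa0|].
      constructor; constructor; apply perm_swap. }
  destruct Hw as (w&Pa&nw&wz).
  destruct (out_at N x A a Hg Hr Ht IA Ia (Hsym _ _ HaA)) as (p1&p2&PA&np1&np2).
  destruct (out_at N x b B Hg Hr Ht Ib IB HbB) as (q1&q2&Pb&nq1&nq2).
  destruct (out_at N x B b Hg Hr Ht IB Ib (Hsym _ _ HbB)) as (r1&r2&PB&nr1&nr2).
  assert (p1z : p1 <> z) by (intro; subst; apply nAz; apply (in_perm _ _ _ PA); simpl; tauto).
  assert (p2z : p2 <> z) by (intro; subst; apply nAz; apply (in_perm _ _ _ PA); simpl; tauto).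
  assert (q1z : q1 <> z) by (intro; subst; apply zb; apply (in_perm _ _ _ Pb); simpl; tauto).
  assert (q2z : q2 <> z) by (intro; subst; apply zb; apply (in_perm _ _ _ Pb); simpl; tauto).
  assert (r1z : r1 <> z) by (intro; subst; apply zB; apply (in_perm _ _ _ PB); simpl; tauto).
  assert (r2z : r2 <> z) by (intro; subst; apply zB; apply (in_perm _ _ _ PB); simpl; tauto).
  set (f := fun v => indicR (v = a \/ v = A \/ v = z) - indicR (v = b \/ v = B)).
  assert (F0 : forall v, ~ In v (N x) -> v <> z -> f v = 0).
  { intros v Hv Hvz. unfold f. rewrite (indicR_F (v = a \/ _)), (indicR_F (v = b \/ _)); try lra;
    intuition subst; tauto. }
  assert (K : K_inf_eq N x (5/2)).
  { unfold curvature_sharp in Hs. replace (2 + ntri N x / INR 4) with (5/2) in Hs; auto.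
    rewrite (ntri_val N x _ Px). cbn [sumR map fold_right].
    repeat first [rewrite (indicR_T (In A (N a))) by auto
                 | rewrite (indicR_T (In a (N A))) by auto
                 | rewrite (indicR_T (In B (N b))) by auto
                 | rewrite (indicR_T (In b (N B))) by auto
                 | rewrite (indicR_F (In a (N a))) by auto
                 | rewrite (indicR_F (In A (N A))) by auto
                 | rewrite (indicR_F (In b (N b))) by auto
                 | rewrite (indicR_F (In B (N B))) by auto
                 | rewrite (indicR_F (In b (N a))) by auto
                 | rewrite (indicR_F (In B (N a))) by auto
                 | rewrite (indicR_F (In b (N A))) by auto
                 | rewrite (indicR_F (In B (N A))) by auto
                 | rewrite (indicR_F (In a (N b))) by auto
                 | rewrite (indicR_F (In A (N b))) by auto
                 | rewrite (indicR_F (In a (N B))) by auto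
                 | rewrite (indicR_F (In A (N B))) by auto].
    simpl. field. }
  destruct (calc N f x a A b B z w p1 p2 q1 q2 r1 r2 Px Pa PA Pb PB) as [G1 G2].
  - apply F0; auto.
  - unfold f; rewrite indicR_T, indicR_F; [lra| |tauto]. intros [E|E]; congruence.
  - unfold f; rewrite indicR_T, indicR_F; [lra| |tauto]. intros [E|E]; congruence.
  - unfold f; rewrite indicR_F, indicR_T; [lra|tauto|]. intros [E|[E|E]]; congruence.
  - unfold f; rewrite indicR_F, indicR_T; [lra|tauto|]. intros [E|[E|E]]; congruence.
  - unfold f; rewrite indicR_T, indicR_F; [lra| |tauto]. intros [E|E]; congruence.
  - apply F0; auto.
  - apply F0; auto.
  - apply F0; auto.
  - apply F0; auto.
  - apply F0; auto.
  - apply F0; auto.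
  - apply F0; auto.
  - pose proof (sharp_ineq N x f K) as H. rewrite G1, G2 in H. lra.
Qed.

Lemma row_lemma {V : Type} (N : V -> list V) x a A b B :
  simple_graph N -> regular N 4 -> edge_in_unique_triangle N ->
  curvature_sharp N 4 x ->
  Permutation (N x) [a;A;b;B] -> In A (N a) -> In B (N b) ->
  exists p q, Permutation (N a) [x;A;p;q] /\ In p (N b) /\ In q (N B) /\
    ~ In p (N B) /\ ~ In q (N b) /\ ~ In p (N x) /\ ~ In q (N x) /\ In q (N p).
Proof.
  intros Hg Hr Ht Hs Px HaA HbB.
  pose proof (Permutation_NoDup Px (gnd N x Hg)) as Hnd.
  destruct (nodup4 _ _ _ _ Hnd) as (n1&n2&n3&n4&n5&n6).
  assert (Ia : In a (N x)) by (apply (in_perm _ _ _ Px); simpl; tauto).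
  assert (IA : In A (N x)) by (apply (in_perm _ _ _ Px); simpl; tauto).
  assert (Ib : In b (N x)) by (apply (in_perm _ _ _ Px); simpl; tauto).
  assert (IB : In B (N x)) by (apply (in_perm _ _ _ Px); simpl; tauto).
  assert (Hsym : forall u v, In v (N u) -> In u (N v)) by (intros; apply gsym; auto).
  assert (Hirr : forall u, ~ In u (N u)) by (intros; apply girr; auto).
  destruct (out_at N x a A Hg Hr Ht Ia IA HaA) as (o1&o2&Pa&no1&no2).
  pose proof (Permutation_NoDup Pa (gnd N a Hg)) as Hnda.
  destruct (nodup4 _ _ _ _ Hnda) as (m1&m2&m3&m4&m5&m6).
  assert (I1 : In o1 (N a)) by (apply (in_perm _ _ _ Pa); simpl; tauto).
  assert (I2 : In o2 (N a)) by (apply (in_perm _ _ _ Pa); simpl; tauto).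
  assert (S : forall o, In o (N a) -> o <> x -> o <> A -> In o (N b) \/ In o (N B)).
  { intros o Ho ox oA. destruct (classic (In o (N b))); auto.
    destruct (classic (In o (N B))); auto. exfalso.
    eapply (no_single N x a A b B o); eauto. }
  assert (NB : forall o, o <> x -> In o (N b) -> In o (N B) -> False).
  { intros o ox H1 H2. apply ox. eapply (common_eq N b B); eauto. }
  assert (E12 : In o2 (N o1)).
  { destruct (Ht a o1 I1) as [t [[Ht1 Ht2] _]].
    pose proof (Permutation_in _ Pa Ht1) as Hq. simpl in Hq.
    destruct Hq as [<-|[<-|[<-|[<-|[]]]]].
    - exfalso. apply no1. auto.
    - exfalso. apply m2. symmetry. eapply (common_eq N a A); eauto.
    - exfalso. eapply Hirr; eauto.
    - auto. }
  assert (D : forall c, c <> a -> In o1 (N c) -> In o2 (N c) -> False).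
  { intros c ca H1 H2. apply ca. eapply (common_eq N o1 o2); eauto. }
  destruct (S o1 I1 (not_eq_sym m2) (not_eq_sym m4)) as [H1|H1].
  - exists o1, o2. split; auto. split; auto.
    assert (~ In o1 (N B)) by (intro; eapply (NB o1 (not_eq_sym m2)); eauto).
    assert (~ In o2 (N b)) by (intro; eapply (D b (not_eq_sym n2)); eauto).
    destruct (S o2 I2 (not_eq_sym m3) (not_eq_sym m5)) as [H2|H2]; tauto.
  - assert (~ In o1 (N b)) by (intro; eapply (NB o1 (not_eq_sym m2)); eauto).
    assert (~ In o2 (N B)) by (intro; eapply (D B (not_eq_sym n3)); eauto).
    destruct (S o2 I2 (not_eq_sym m3) (not_eq_sym m5)) as [H2|H2]; [|tauto].
    exists o2, o1. split.
    + eapply perm_trans; [exact Pa|]. constructor; constructor; apply perm_swap.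
    + repeat split; auto.
Qed.

Lemma four_nbrs {V : Type} (N : V -> list V) v L :
  length (N v) = 4%nat -> NoDup L -> length L = 4%nat -> incl L (N v) ->
  forall y, In y (N v) <-> In y L.
Proof.
  intros H1 H2 H3 H4 y. split; [|apply H4].
  apply (NoDup_length_incl H2); [lia|exact H4].
Qed.

Definition s3 (t : three) : three := match t with T0 => T1 | T1 => T2 | T2 => T0 end.
Definition nbrs (p : three * three) : list (three * three) :=
  let (i, j) := p in [(i, s3 j); (i, s3 (s3 j)); (s3 i, j); (s3 (s3 i), j)].

Lemma nbrs_ok p q : In q (nbrs p) <-> k33_adj p q.
Proof.
  destruct p as [[] []], q as [[] []]; unfold k33_adj; simpl;
  split; intro H; try (intuition discriminate); try (intuition congruence).
Qed.

Lemma nbrs_nodup p : NoDup (nbrs p).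
Proof. destruct p as [[] []]; simpl; repeat constructor; simpl; intuition discriminate. Qed.

Theorem mainTheorem4 (V : Type) (N : V -> list V)
  (Hg : simple_graph N) (Hreg : regular N 4) (Hconn : connected N)
  (Hsharp : forall x, curvature_sharp N 4 x)
  (Htri : edge_in_unique_triangle N) :
  iso_to_K3xK3 N.
Proof.
  destruct Hconn as [[x0] Hc].
  assert (Hsym : forall u v, In v (N u) -> In u (N v)) by (intros; apply gsym; auto).
  assert (Hirr : forall u, ~ In u (N u)) by (intros; apply girr; auto).
  destruct (split_at N x0 Hg Hreg Htri) as (a&A&b&B&Px&HaA&HbB).
  pose proof (Permutation_NoDup Px (gnd N x0 Hg)) as Hnd.
  destruct (nodup4 _ _ _ _ Hnd) as (n1&n2&n3&n4&n5&n6).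
  assert (Ia : In a (N x0)) by (apply (in_perm _ _ _ Px); simpl; tauto).
  assert (IA : In A (N x0)) by (apply (in_perm _ _ _ Px); simpl; tauto).
  assert (Ib : In b (N x0)) by (apply (in_perm _ _ _ Px); simpl; tauto).
  assert (IB : In B (N x0)) by (apply (in_perm _ _ _ Px); simpl; tauto).
  destruct (row_lemma N x0 a A b B Hg Hreg Htri (Hsharp x0) Px HaA HbB)
    as (u1&u2&Pa&u1b&u2B&nu1B&nu2b&nu1&nu2&u12).
  assert (Px' : Permutation (N x0) [A;a;b;B]) by (eapply perm_trans; [exact Px| apply perm_swap]).
  destruct (row_lemma N x0 A a b B Hg Hreg Htri (Hsharp x0) Px' (Hsym _ _ HaA) HbB)
    as (v1&v2&PA&v1b&v2B&nv1B&nv2b&nv1&nv2&v12).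
  destruct (nodup4 _ _ _ _ (Permutation_NoDup Pa (gnd N a Hg))) as (k1&k2&k3&k4&k5&k6).
  destruct (nodup4 _ _ _ _ (Permutation_NoDup PA (gnd N A Hg))) as (l1&l2&l3&l4&l5&l6).
  assert (au1 : In u1 (N a)) by (apply (in_perm _ _ _ Pa); simpl; tauto).
  assert (au2 : In u2 (N a)) by (apply (in_perm _ _ _ Pa); simpl; tauto).
  assert (Av1 : In v1 (N A)) by (apply (in_perm _ _ _ PA); simpl; tauto).
  assert (Av2 : In v2 (N A)) by (apply (in_perm _ _ _ PA); simpl; tauto).
  assert (nAu1 : ~ In u1 (N A)) by (intro; apply k2; symmetry; eapply (common_eq N a A); eauto).
  assert (nAu2 : ~ In u2 (N A)) by (intro; apply k3; symmetry; eapply (common_eq N a A); eauto).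
  assert (nav1 : ~ In v1 (N a)) by (intro; apply l2; symmetry; eapply (common_eq N A a); eauto).
  assert (nav2 : ~ In v2 (N a)) by (intro; apply l3; symmetry; eapply (common_eq N A a); eauto).
  assert (d1 : x0 <> a) by (intro; subst; eauto).
  assert (d2 : x0 <> A) by (intro; subst; eauto).
  assert (d3 : x0 <> b) by (intro; subst; eauto).
  assert (d4 : x0 <> B) by (intro; subst; eauto).
  assert (e1 : u1 <> a) by (intro; subst; eauto).
  assert (e2 : u1 <> A) by (intro; subst; eauto).
  assert (e3 : u1 <> b) by (intro; subst; eauto).
  assert (e4 : u1 <> B) by (intro; subst; eauto).
  assert (e5 : u2 <> a) by (intro; subst; eauto).
  assert (e6 : u2 <> A) by (intro; subst; eauto).
  assert (e7 : u2 <> b) by (intro; subst; eauto).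
  assert (e8 : u2 <> B) by (intro; subst; eauto).
  assert (f1 : v1 <> a) by (intro; subst; eauto).
  assert (f2 : v1 <> A) by (intro; subst; eauto).
  assert (f3 : v1 <> b) by (intro; subst; eauto).
  assert (f4 : v1 <> B) by (intro; subst; eauto).
  assert (f5 : v2 <> a) by (intro; subst; eauto).
  assert (f6 : v2 <> A) by (intro; subst; eauto).
  assert (f7 : v2 <> b) by (intro; subst; eauto).
  assert (f8 : v2 <> B) by (intro; subst; eauto).
  assert (h1 : u1 <> v1) by (intro; subst; eauto).
  assert (h2 : u1 <> v2) by (intro; subst; eauto).
  assert (h3 : u2 <> v1) by (intro; subst; eauto).
  assert (h4 : u2 <> v2) by (intro; subst; eauto).
  assert (Nb : forall y, In y (N b) <-> In y [x0;B;u1;v1]).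
  { apply four_nbrs; auto. apply mk_nodup4; congruence.
    intros y Hy; simpl in Hy; intuition subst; auto. }
  assert (NB : forall y, In y (N B) <-> In y [x0;b;u2;v2]).
  { apply four_nbrs; auto. apply mk_nodup4; congruence.
    intros y Hy; simpl in Hy; intuition subst; auto. }
  assert (uv1 : In v1 (N u1)).
  { destruct (Htri b u1 u1b) as [t [[Ht1 Ht2] _]].
    apply Nb in Ht1. simpl in Ht1. destruct Ht1 as [<-|[<-|[<-|[<-|[]]]]].
    - exfalso; apply nu1; auto.
    - exfalso; apply nu1B; auto.
    - exfalso; eapply Hirr; eauto.
    - auto. }
  assert (uv2 : In v2 (N u2)).
  { destruct (Htri B u2 u2B) as [t [[Ht1 Ht2] _]].
    apply NB in Ht1. simpl in Ht1. destruct Ht1 as [<-|[<-|[<-|[<-|[]]]]].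
    - exfalso; apply nu2; auto.
    - exfalso; apply nu2b; auto.
    - exfalso; eapply Hirr; eauto.
    - auto. }
  set (g := fun p : three * three => match p with
    | (T0, T0) => x0 | (T0, T1) => a | (T0, T2) => A
    | (T1, T0) => b | (T2, T0) => B | (T1, T1) => u1
    | (T2, T1) => u2 | (T1, T2) => v1 | (T2, T2) => v2 end).
  assert (ginj : forall p q, g p = g q -> p = q).
  { intros [[] []] [[] []]; simpl; intro E; try reflexivity; exfalso; congruence. }
  assert (Hadj : forall p y, In y (N (g p)) <-> In y (map g (nbrs p))).
  { intro p. apply four_nbrs; auto.
    - apply FinFun.Injective_map_NoDup; [exact ginj|apply nbrs_nodup].
    - destruct p as [[] []]; reflexivity.
    - destruct p as [[] []]; simpl; intros y Hy; simpl in Hy; intuition subst; auto. }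
  assert (inv : forall u w, clos_refl_trans V (fun a b => In b (N a)) u w ->
      (exists p, g p = u) -> exists q, g q = w).
  { intros u w H. induction H as [u w Huw| u | u w z _ IH1 _ IH2]; auto.
    intros [p <-]. apply Hadj in Huw. apply in_map_iff in Huw.
    destruct Huw as [q [E _]]. eauto. }
  assert (surj : forall v, exists p, g p = v).
  { intro v. apply (inv x0 v (Hc x0 v)). exists (T0, T0). reflexivity. }
  exists (fun v => proj1_sig (constructive_indefinite_description _ (surj v))), g.
  assert (gf : forall v, g (proj1_sig (constructive_indefinite_description _ (surj v))) = v).
  { intro v. destruct (constructive_indefinite_description _ (surj v)); auto. }
  split; [exact gf|]. split.
  - intro p. apply ginj. apply gf.
  - intros x y. set (p := proj1_sig (constructive_indefinite_description _ (surj x))).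
    set (q := proj1_sig (constructive_indefinite_description _ (surj y))).
    rewrite <- nbrs_ok. rewrite <- (gf x), <- (gf y). fold p q.
    rewrite Hadj. split.
    + intro H. apply in_map_iff in H. destruct H as [r [E Hr]].
      apply ginj in E. subst; auto.
    + intro H. apply in_map_iff. eauto.
Qed.
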